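(* Let $\mathbb{T}$ be the $3$-regular tree ($q=2$), let $T_2$ be the star consisting of a vertex $v_0$ and its three neighbours, and let $H\subset T_2$ be a path $a - v_0 - b$ with $a,b$ two of the neighbours of $v_0$. Let $\mu_H$ be the probability measure on $\{0,1\}^{\{a,v_0,b\}}$ giving probability $1/4$ to each of the configurations $(\eta_a,\eta_{v_0},\eta_b)\in\{(0,1,1),(0,0,1),(1,1,0),(1,0,0)\}$. Then $\mu_H$ is locally invariant (LI), but there is no LI probability measure on $\{0,1\}^{T_2}$ whose marginal on $\{0,1\}^{H}$ is $\mu_H$; hence there is no automorphism-invariant probability measure on $\{0,1\}^{\mathbb{T}}$ with marginal $\mu_H$.
   Context: A probability measure $\mu_H$ on $\Omega^{V(H)}$, $H$ a subgraph of $\mathbb{T}$, is locally invariant (LI) if whenever $H_1,H_2$ are connected subgraphs of $H$ and $\phi:H_1\to H_2$ is a graph isomorphism, the marginals of $\mu_H$ on $H_1$ and $H_2$ correspond under $\phi$. *)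

(* Defs.v *)
From HB Require Import structures.
From mathcomp Require Import all_boot all_order all_algebra.
Set Implicit Arguments. Unset Strict Implicit. Unset Printing Implicit Defensive.
Import Order.TTheory GRing.Theory Num.Theory.
Local Open Scope ring_scope.

(* Spin space Omega = {0,1}, encoded as bool (false = 0, true = 1). *)
Definition config (V : finType) := {ffun V -> bool}.

Definition prob_measure (R : numDomainType) (V : finType) (mu : config V -> R) : Prop :=
  (forall eta, 0 <= mu eta) /\ \sum_(eta : config V) mu eta = 1.

Definition marg (R : numDomainType) (V : finType) (mu : config V -> R)
  (W : {set V}) (xi : V -> bool) : R :=
  \sum_(eta : config V | [forall v in W, eta v == xi v]) mu eta.

(* W induces a connected subgraph of the graph (V, e).  In a graph that is a
   subgraph of a tree, connected subgraphs are exactly induced subgraphs on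
   connected vertex sets. *)
Definition connected_set (V : finType) (e : rel V) (W : {set V}) : Prop :=
  forall x y, x \in W -> y \in W ->
    connect [rel u v | [&& u \in W, v \in W & e u v]] x y.

Definition iso_on (V : finType) (e : rel V) (W1 W2 : {set V}) (phi : V -> V) : Prop :=
  {in W1 &, injective phi} /\ phi @: W1 = W2 /\
  {in W1 &, forall x y, e (phi x) (phi y) = e x y}.

Definition LI (R : numDomainType) (V : finType) (e : rel V) (mu : config V -> R) : Prop :=
  forall (W1 W2 : {set V}) (phi : V -> V),
    connected_set e W1 -> connected_set e W2 -> iso_on e W1 W2 phi ->
    forall xi : V -> bool, marg mu W2 xi = marg mu W1 (xi \o phi).

(* Star on 'I_n with centre 0: edges {0,i}, i <> 0.
   For n = 4 this is T_2 (0 = v0, 1 = a, 2 = b, 3 = the third neighbour);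
   for n = 3 it is the path H : a(1) - v0(0) - b(2). *)
Definition star_e (n : nat) : rel 'I_n :=
  fun x y => (val x == 0%N) (+) (val y == 0%N).

Definition muH3 (R : numFieldType) (xa xv xb : bool) : R :=
  if (xa, xv, xb) \in [:: (false, true, true); (false, false, true);
                          (true, true, false); (true, false, false)]
  then 1 / 4%:R else 0.

Definition vH0 : 'I_3 := @Ordinal 3 0 isT.
Definition vHa : 'I_3 := @Ordinal 3 1 isT.
Definition vHb : 'I_3 := @Ordinal 3 2 isT.

Definition muH (R : numFieldType) (eta : config 'I_3) : R :=
  muH3 R (eta vHa) (eta vH0) (eta vHb).

Definition embH (i : 'I_3) : 'I_4 := widen_ord (leqnSn 3) i.

(* Vertices: reduced words over 3 letters (no two consecutive letters equal);
   the empty word is the root.  x :: w is adjacent to w. *)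
Definition reduced (s : seq 'I_3) : bool := sorted (fun a b => a != b) s.
Definition TV := {s : seq 'I_3 | reduced s}.

Definition tchild (u v : TV) : bool :=
  (size (val v) == (size (val u)).+1) && (behead (val v) == val u).
Definition tadj (u v : TV) : bool := tchild u v || tchild v u.

Definition tree_aut (phi : TV -> TV) : Prop :=
  bijective phi /\ forall u v, tadj (phi u) (phi v) = tadj u v.

Definition troot : TV := exist _ [::] isT.
Definition ta : TV := exist _ [:: (@Ordinal 3 0 isT)] isT.
Definition tb : TV := exist _ [:: (@Ordinal 3 1 isT)] isT.

(* A probability measure on {0,1}^T (product sigma-algebra) is encoded by its
   values on cylinder events: nu s = P(eta_v = x for all (v,x) in s).
   By Kolmogorov/Caratheodory (compactness of {0,1}^T) such consistent,
   nonnegative, normalized, additive cylinder functions correspond exactly to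
   probability measures, and the measure is Aut-invariant iff its cylinder
   function is. *)
Definition cyl_prob (R : numDomainType) (nu : seq (TV * bool) -> R) : Prop :=
  [/\ nu [::] = 1,
      (forall s, 0 <= nu s),
      (forall s t, s =i t -> nu s = nu t) &
      (forall v s, nu s = nu ((v, false) :: s) + nu ((v, true) :: s))].

Definition aut_invariant (R : numDomainType) (nu : seq (TV * bool) -> R) : Prop :=
  forall phi, tree_aut phi ->
    forall s, nu [seq (phi p.1, p.2) | p <- s] = nu s.

(* Main.v *)
Require Import Defs.
From HB Require Import structures.
From mathcomp Require Import all_boot all_order all_algebra all_fingroup.
From mathcomp Require Import lra.
Import Order.TTheory GRing.Theory Num.Theory.
Local Open Scope ring_scope.

Lemma muH3E (R : numFieldType) xa xv xb :
  muH3 R xa xv xb = if xa != xb then 1 / 4%:R else 0.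
Proof. by case: xa; case: xv; case: xb. Qed.

Definition mk3 (x y z : bool) : config 'I_3 :=
  [ffun i : 'I_3 => if val i == 0%N then x else if val i == 1%N then y else z].

Lemma sum3 (R : numDomainType) (F : config 'I_3 -> R) :
  \sum_eta F eta = \sum_(x : bool) \sum_(y : bool) \sum_(z : bool) F (mk3 x y z).
Proof.
rewrite (reindex (fun p : bool * (bool * bool) => mk3 p.1 p.2.1 p.2.2)) /=.
  under [RHS]eq_bigr do rewrite pair_big.
  by rewrite pair_big.
apply: onW_bij.
exists (fun eta : config 'I_3 => (eta vH0, (eta vHa, eta vHb))).
  by case=> x [y z]; rewrite !ffunE.
move=> eta; apply/ffunP => i; rewrite ffunE.
by case: i => [[|[|[|m]]] Hm] //=; congr (eta _); apply: val_inj.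
Qed.

Lemma forall3 (P : 'I_3 -> bool) : [forall v, P v] = [&& P vH0, P vHa & P vHb].
Proof.
apply/forallP/and3P => [H|[h0 h1 h2]]; first by split; apply: H.
by case=> [[|[|[|m]]] Hm]; [ have -> : Ordinal Hm = vH0 by apply: val_inj
  | have -> : Ordinal Hm = vHa by apply: val_inj
  | have -> : Ordinal Hm = vHb by apply: val_inj | ].
Qed.

Lemma card3 (W : {set 'I_3}) : #|W| = ((vH0 \in W) + (vHa \in W) + (vHb \in W))%N.
Proof.
rewrite -sum1_card big_mkcond /= !big_ord_recl big_ord0 addn0 addnA.
have E : forall b : bool, (if b then 1 else 0)%N = b by case.
by rewrite !E; congr (_ + _ + _); congr (nat_of_bool (_ \in W)); apply: val_inj.
Qed.

Definition cf (R : numFieldType) (P d : bool) (n : nat) : R :=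
  if P then (if d then (if n == 3%N then 1/4%:R else 1/2%:R) else 0)
  else (if n == 0%N then 1 else if n == 1%N then 1/2%:R else 1/4%:R).

Lemma margH (R : realFieldType) (W : {set 'I_3}) (xi : 'I_3 -> bool) :
  marg (muH R) W xi = cf R ((vHa \in W) && (vHb \in W)) (xi vHa != xi vHb) #|W|.
Proof.
rewrite /marg big_mkcond /= sum3 !big_bool /= card3.
rewrite !forall3 /muH !ffunE /= !muH3E.
case: (vH0 \in W); case: (vHa \in W); case: (vHb \in W);
case: (xi vH0); case: (xi vHa); case: (xi vHb); rewrite /cf /=; lra.
Qed.

Lemma conn0 (W : {set 'I_3}) : connected_set (@star_e 3) W ->
  vHa \in W -> vHb \in W -> vH0 \in W.
Proof.
move=> c ha hb; case/connectP: (c _ _ ha hb) => [[|z p]] /=.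
  by move=> _ /(congr1 val).
case/andP=> /and3P [_ zW e] _ _.
suff -> : vH0 = z by [].
by apply: val_inj; move: e; rewrite /star_e /= => /eqP.
Qed.

Lemma PW (W : {set 'I_3}) : connected_set (@star_e 3) W ->
  (vHa \in W) && (vHb \in W) = (#|W| == 3%N).
Proof.
move=> c; apply/andP/eqP => [[ha hb]|h].
  by rewrite card3 ha hb (conn0 _ c ha hb).
have /eqP -> : W == setT by rewrite eqEcard subsetT cardsT card_ord h.
by rewrite !in_setT.
Qed.

Lemma LI_H (R : realFieldType) : LI (@star_e 3) (muH R).
Proof.
move=> W1 W2 phi c1 c2 [inj [img edge]] xi.
rewrite !margH !PW // -img card_in_imset //.
case E: (#|W1| == 3%N); last by [].
have /eqP W1T : W1 == setT by rewrite eqEcard subsetT cardsT card_ord (eqP E).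
rewrite W1T in inj edge.
have i1 : phi vH0 != phi vHa by apply/eqP => /inj; rewrite !in_setT => /(_ isT isT) /(congr1 val).
have i2 : phi vH0 != phi vHb by apply/eqP => /inj; rewrite !in_setT => /(_ isT isT) /(congr1 val).
have i3 : phi vHa != phi vHb by apply/eqP => /inj; rewrite !in_setT => /(_ isT isT) /(congr1 val).
have e1 := edge vH0 vHa (in_setT _) (in_setT _).
have e2 := edge vH0 vHb (in_setT _) (in_setT _).
suff : ((phi vHa == vHa) && (phi vHb == vHb)) || ((phi vHa == vHb) && (phi vHb == vHa)).
  rewrite /=; case/orP => /andP [/eqP -> /eqP ->] //=.
  by rewrite eq_sym.
move: i1 i2 i3 e1 e2; rewrite /star_e /=.
case: (phi vH0) => [[|[|[|m]]] H0] //;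
case: (phi vHa) => [[|[|[|m']]] H1] //;
case: (phi vHb) => [[|[|[|m'']]] H2] //.
Qed.

Lemma prob_H (R : realFieldType) : prob_measure (muH R).
Proof.
split.
  by move=> eta; rewrite /muH muH3E; case: ifP => _; lra.
by rewrite sum3 !big_bool /muH !ffunE /= !muH3E /=; lra.
Qed.
Lemma conn_star n (W : {set 'I_n}) (z0 : 'I_n) : val z0 = 0%N -> z0 \in W ->
  connected_set (@star_e n) W.
Proof.
move=> z0v z0W.
have K : forall x, x \in W -> connect [rel u v | [&& u \in W, v \in W & star_e u v]] x z0.
  move=> x xW; case: (eqVneq x z0) => [->|ne]; first exact: connect0.
  apply: connect1 => /=; rewrite xW z0W /star_e z0v eqxx /= addbT.
  by apply: contra ne => /eqP h; apply/eqP; apply: val_inj; rewrite /= h z0v.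
have Ks : forall y, y \in W -> connect [rel u v | [&& u \in W, v \in W & star_e u v]] z0 y.
  move=> y yW; case: (eqVneq y z0) => [->|ne]; first exact: connect0.
  apply: connect1 => /=; rewrite yW z0W /star_e z0v eqxx /=.
  by apply: contra ne => /eqP h; apply/eqP; apply: val_inj; rewrite /= h z0v.
by move=> x y xW yW; apply: connect_trans (K x xW) (Ks y yW).
Qed.

Lemma part2 (R : realFieldType) : ~ (exists mu : config 'I_4 -> R,
           [/\ prob_measure mu, LI (@star_e 4) mu &
               forall xi : config 'I_3,
                 muH R xi = \sum_(eta : config 'I_4 |
                                   [forall i : 'I_3, eta (embH i) == xi i]) mu eta]).
Proof.
case=> mu [[nn s1] li hm].
have zero : forall (p q : 'I_4) (eta : config 'I_4), val p != 0%N -> val q != 0%N ->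
    p != q -> eta p = eta q -> mu eta = 0.
  move=> p q eta hp hq pq epq.
  pose phi := fun i : 'I_4 => if val i == 1%N then p else if val i == 2%N then q else i.
  pose W1 := [set embH i | i in 'I_3].
  have z0 : embH vH0 \in W1 by apply: imset_f.
  have phi0 : forall x, (val (phi x) == 0%N) = (val x == 0%N).
    move=> x; rewrite /phi; case: ifP => [/eqP->|_]; first by rewrite (negbTE hp).
    by case: ifP => [/eqP->|_]; first by rewrite (negbTE hq).
  have iso : iso_on (@star_e 4) W1 (phi @: W1) phi.
    split; last split => //.
      move=> x y /imsetP [i _ ->] /imsetP [j _ ->].
      case: i => [[|[|[|m]]] Hm] //; case: j => [[|[|[|m']]] Hm'] //;
      rewrite /phi /= => h; try (by apply: val_inj);
      first [ by move: pq; rewrite h eqxx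
            | by move: pq; rewrite -h eqxx
            | by move: hp; rewrite h
            | by move: hp; rewrite -h
            | by move: hq; rewrite h
            | by move: hq; rewrite -h ].
    by move=> x y _ _; rewrite /star_e !phi0.
  have H := li W1 (phi @: W1) phi (@conn_star 4 W1 (embH vH0) erefl z0)
    (@conn_star 4 (phi @: W1) (phi (embH vH0)) erefl (imset_f _ z0)) iso eta.
  have : marg mu W1 (eta \o phi) = 0.
    pose xi' := [ffun i : 'I_3 => eta (phi (embH i))].
    have -> : marg mu W1 (eta \o phi) = muH R xi'.
      rewrite hm /marg; apply: eq_bigl => eta'.
      apply/forallP/forallP => [h i | h v].
        by rewrite ffunE; move/implyP: (h (embH i)); apply; apply: imset_f.
      apply/implyP => /imsetP [i _ ->]; move: (h i); by rewrite ffunE.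
    rewrite /muH muH3E !ffunE /=.
    by rewrite /phi /= epq eqxx.
  rewrite -H /marg (bigD1 eta) /=; last by apply/forallP => v; apply/implyP.
  move=> /eqP; rewrite paddr_eq0 ?nn //; first by case/andP => /eqP.
  by apply: sumr_ge0 => i _; apply: nn.
have all0 : forall eta, mu eta = 0.
  move=> eta.
  have : [|| eta (@Ordinal 4 1 isT) == eta (@Ordinal 4 2 isT),
             eta (@Ordinal 4 1 isT) == eta (@Ordinal 4 3 isT) |
             eta (@Ordinal 4 2 isT) == eta (@Ordinal 4 3 isT)].
    by case: (eta (@Ordinal 4 1 isT)); case: (eta (@Ordinal 4 2 isT));
       case: (eta (@Ordinal 4 3 isT)).
  by case/or3P => /eqP; apply: zero.
by move: s1; rewrite big1 // => /eqP; rewrite eq_sym oner_eq0.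
Qed.
Lemma reduced_map (p : {perm 'I_3}) s : reduced s -> reduced (map p s).
Proof.
rewrite /reduced sorted_map; apply: sub_sorted => x y /=.
by rewrite (inj_eq perm_inj).
Qed.
Definition tmap (p : {perm 'I_3}) (u : TV) : TV :=
  exist _ (map p (val u)) (@reduced_map p _ (valP u)).

Lemma tmap_aut p : tree_aut (tmap p).
Proof.
have K : forall (q r : {perm 'I_3}), cancel q r -> cancel (tmap q) (tmap r).
  move=> q r qr u; apply/val_inj => /=; rewrite -map_comp.
  by rewrite (eq_map (g := id)) ?map_id // => x /=; rewrite qr.
split.
  by exists (tmap p^-1); apply: K; [exact: permK | exact: permKV].
have C : forall u v, tchild (tmap p u) (tmap p v) = tchild u v.
  by move=> u v; rewrite /tchild /= !size_map behead_map (inj_eq (inj_map perm_inj)).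
by move=> u v; rewrite /tadj !C.
Qed.

Definition tc : TV := exist _ [:: (@Ordinal 3 2 isT)] isT.
Lemma part3 (R : realFieldType) : ~ (exists nu : seq (TV * bool) -> R,
           [/\ cyl_prob nu, aut_invariant nu &
               forall xa xv xb : bool,
                 nu [:: (ta, xa); (troot, xv); (tb, xb)] = muH3 R xa xv xb]).
Proof.
case=> nu [[n0 nn eqi sp] inv H3].
have mono : forall v x s, nu ((v, x) :: s) <= nu s.
  move=> v x s; rewrite (sp v s).
  by case: x; [rewrite lerDr | rewrite lerDl].
have sub : forall s t, {subset t <= s} -> nu s <= nu t.
  move=> s t st; rewrite (eqi s (s ++ t)).
    elim: s {st} => [|[v x] s IH] //=; exact: le_trans (mono _ _ _) IH.
  move=> z; rewrite mem_cat; case: (boolP (z \in s)) => //= zs.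
  by apply/esym/negbTE; apply: contra zs; apply: st.
have Z : forall u w x s, nu [:: (u, x); (w, x)] = 0 ->
    (u, x) \in s -> (w, x) \in s -> nu s = 0.
  move=> u w x s h us ws; apply/eqP; rewrite eq_le nn andbT -h; apply: sub.
  by move=> z; rewrite !inE => /orP[] /eqP ->.
have eqH : forall x, muH3 R x false x + muH3 R x true x = 0.
  by case; rewrite !muH3E /= addr0.
have pairZ : forall u w, (forall x v, nu [:: (u, x); (troot, v); (w, x)] = muH3 R x v x) ->
    forall x, nu [:: (u, x); (w, x)] = 0.
  move=> u w h x; rewrite (sp troot) -(eqH x) -(h x false) -(h x true).
  by congr (_ + _); apply: eqi => z; rewrite !inE orbCA.
have t1 : tmap (tperm (@Ordinal 3 1 isT) (@Ordinal 3 2 isT)) ta = ta.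
  by apply: val_inj => /=; rewrite tpermD.
have t2 : tmap (tperm (@Ordinal 3 1 isT) (@Ordinal 3 2 isT)) troot = troot.
  by apply: val_inj.
have t3 : tmap (tperm (@Ordinal 3 1 isT) (@Ordinal 3 2 isT)) tb = tc.
  by apply: val_inj => /=; rewrite tpermL.
have u1 : tmap (tperm (@Ordinal 3 0 isT) (@Ordinal 3 2 isT)) ta = tc.
  by apply: val_inj => /=; rewrite tpermL.
have u2 : tmap (tperm (@Ordinal 3 0 isT) (@Ordinal 3 2 isT)) troot = troot.
  by apply: val_inj.
have u3 : tmap (tperm (@Ordinal 3 0 isT) (@Ordinal 3 2 isT)) tb = tb.
  by apply: val_inj => /=; rewrite tpermD.
have P1 := pairZ ta tb (fun x v => H3 x v x).
have P2 : forall x, nu [:: (ta, x); (tc, x)] = 0.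
  apply: pairZ => x v; rewrite -(H3 x v x).
  by rewrite -(inv _ (tmap_aut (tperm (@Ordinal 3 1 isT) (@Ordinal 3 2 isT))) [:: (ta, x); (troot, v); (tb, x)]) /= t1 t2 t3.
have P3 : forall x, nu [:: (tc, x); (tb, x)] = 0.
  apply: pairZ => x v; rewrite -(H3 x v x).
  by rewrite -(inv _ (tmap_aut (tperm (@Ordinal 3 0 isT) (@Ordinal 3 2 isT))) [:: (ta, x); (troot, v); (tb, x)]) /= u1 u2 u3.
have tri : forall x y z, nu [:: (tc, z); (tb, y); (ta, x)] = 0.
  case; case; case;
  first [ by apply: (Z _ _ _ _ (P1 true)); rewrite !inE eqxx ?orbT
        | by apply: (Z _ _ _ _ (P1 false)); rewrite !inE eqxx ?orbT
        | by apply: (Z _ _ _ _ (P2 true)); rewrite !inE eqxx ?orbT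
        | by apply: (Z _ _ _ _ (P2 false)); rewrite !inE eqxx ?orbT
        | by apply: (Z _ _ _ _ (P3 true)); rewrite !inE eqxx ?orbT
        | by apply: (Z _ _ _ _ (P3 false)); rewrite !inE eqxx ?orbT ].
move: n0; rewrite (sp ta) (sp tb [:: (ta, false)]) (sp tb [:: (ta, true)]).
rewrite (sp tc [:: (tb, false); (ta, false)]) (sp tc [:: (tb, true); (ta, false)]).
rewrite (sp tc [:: (tb, false); (ta, true)]) (sp tc [:: (tb, true); (ta, true)]).
by rewrite !tri !addr0 => /eqP; rewrite eq_sym oner_eq0.
Qed.

Theorem mainTheorem12 (R : realFieldType) :
  [/\ prob_measure (muH R) /\ LI (@star_e 3) (muH R),
      ~ (exists mu : config 'I_4 -> R,
           [/\ prob_measure mu, LI (@star_e 4) mu &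
               forall xi : config 'I_3,
                 muH R xi = \sum_(eta : config 'I_4 |
                                   [forall i : 'I_3, eta (embH i) == xi i]) mu eta])
    & ~ (exists nu : seq (TV * bool) -> R,
           [/\ cyl_prob nu, aut_invariant nu &
               forall xa xv xb : bool,
                 nu [:: (ta, xa); (troot, xv); (tb, xb)] = muH3 R xa xv xb])].
Proof.
split; [split; [exact: prob_H | exact: LI_H] | exact: part2 | exact: part3].
Qed.
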